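(* Let $G$ be a fullerene graph. Then $G$ has a perfect star packing if and only if $G$ has an independent vertex set $S^*$ such that each connected component of $G-S^*$ is a cycle which is an induced cycle of $G$.
   Context: A fullerene graph is a finite simple connected (equivalently, $3$-connected) plane cubic graph all of whose faces are pentagons or hexagons. A perfect star packing of a graph $G$ is a spanning subgraph of $G$ every connected component of which is isomorphic to the star $K_{1,3}$. A cycle $v_1\cdots v_k v_1$ in $G$ is induced if it has no chord, i.e. no edge $v_iv_j$ of $G$ with $v_i,v_j$ non-consecutive on the cycle. *)

(* Defs.v *)
From mathcomp Require Import all_boot.
Set Implicit Arguments. Unset Strict Implicit. Unset Printing Implicit Defensive.

Section Defs.
Variable V : finType.
Implicit Types (e : rel V).

Definition simple_graph e := symmetric e /\ irreflexive e.

Definition connected_graph e := forall u v : V, connect e u v.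

Definition neighbours e (v : V) : {set V} := [set u | e v u].

Definition cubic e := forall v : V, #|neighbours e v| = 3.

Definition dart e : pred (V * V) := [pred d | e d.1 d.2].

(* A rotation system: sigma v is a cyclic permutation of the neighbours of v
   (the clockwise successor of a neighbour of v around v). *)
Definition rotation_system e (sigma : V -> V -> V) :=
  forall v : V,
    [/\ {in neighbours e v, forall u, sigma v u \in neighbours e v},
        {in neighbours e v &, injective (sigma v)} &
        {in neighbours e v &, forall u w, fconnect (sigma v) u w}].

Definition face_step (sigma : V -> V -> V) (d : V * V) : V * V :=
  (d.2, sigma d.2 d.1).

(* number of faces of the embedding = number of face_step orbits on darts *)
Definition nb_faces e sigma := fcard (face_step sigma) (dart e).

(* a plane (genus 0) embedding of a connected graph given by a rotation
   system: Euler's formula |V| - |E| + |F| = 2, with |E| = #darts / 2 *)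
Definition plane_rotation e sigma :=
  rotation_system e sigma /\ #|V| + nb_faces e sigma = #|dart e| %/ 2 + 2.

(* fullerene graph: finite simple connected plane cubic graph all of whose
   faces are pentagons or hexagons (face length = length of the face orbit) *)
Definition fullerene e :=
  [/\ simple_graph e, connected_graph e, cubic e &
      exists sigma, plane_rotation e sigma /\
        {in dart e, forall d, order (face_step sigma) d \in [:: 5; 6]}].

(* perfect star packing: spanning subgraph H of G every component of which
   is isomorphic to K_{1,3}: 4 vertices, a centre c, and H-edges inside the
   component are exactly the pairs {c, x} with x a leaf. *)
Definition component (H : rel V) (v : V) : {set V} := [set u | connect H v u].

Definition is_K13_component (H : rel V) (v : V) :=
  #|component H v| = 4 /\
  exists2 c, c \in component H v &
    {in component H v &, forall x y, H x y = ((x == c) != (y == c))}.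

Definition perfect_star_packing e :=
  exists H : rel V, [/\ subrel H e, symmetric H &
                       forall v, is_K13_component H v].

Definition independent e (S : {set V}) := {in S &, forall x y, ~~ e x y}.

Definition del_rel e (S : {set V}) : rel V :=
  [rel x y | e x y && (x \notin S) && (y \notin S)].

Definition induced_cycle_on e (C : {set V}) :=
  exists s : seq V, [/\ uniq s, 3 <= size s, C = [set x in s] &
    {in s &, forall x y, e x y = (y == next s x) || (x == next s y)}].

Definition components_induced_cycles e (S : {set V}) :=
  forall v, v \notin S -> induced_cycle_on e (component (del_rel e S) v).

End Defs.

(* Main.v *)
Require Import Defs.
From mathcomp Require Import all_boot.
Set Implicit Arguments. Unset Strict Implicit. Unset Printing Implicit Defensive.

Lemma next_neq_prev (T : eqType) (s : seq T) x :
  uniq s -> 2 < size s -> x \in s -> next s x != prev s x.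
Proof.
move=> us ss xs; apply/eqP => E.
have E2 : next s (next s x) = x by rewrite E next_prev.
case: (rot_to xs) => i p hp.
have := E2; rewrite -!(next_rot i us) hp.
have : 2 < size (x :: p) by rewrite -hp size_rot.
have : uniq (x :: p) by rewrite -hp rot_uniq.
case: p {hp} => [|a [|b t]] //=; rewrite eqxx !inE !negb_or => /and4P[/and3P[xa xb _] /andP[ab _] _ _] _.
have ax : (a == x) = false by rewrite eq_sym (negbTE xa).
by rewrite ax eqxx => /eqP; rewrite eq_sym (negbTE xb).
Qed.

Lemma conn_sub (V : finType) (r : rel V) (T : pred V) x y :
  (forall a b, T a -> r a b -> T b) -> T x -> connect r x y -> T y.
Proof.
move=> cl Tx /connectP [p pth ->]; elim: p x Tx pth => //= z p IH x Tx /andP[rxz pth].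
exact: IH (cl _ _ Tx rxz) pth.
Qed.

Lemma max_path (V : finType) (r : rel V) v : exists p,
  [/\ path r v p, uniq (v :: p) &
      forall q, path r v q -> uniq (v :: q) -> size q <= size p].
Proof.
pose P n := [exists t : n.-tuple V, path r v t && uniq (v :: t)].
have exP : exists n, P n by exists 0; apply/existsP; exists [tuple].
have ubP : forall n, P n -> n <= #|V|.
  move=> n /existsP [t /andP[_ /card_uniqP ut]].
  rewrite -(size_tuple t) -ltnS -[(size t).+1]/(size (v :: val t)) -ut. exact: leqW (max_card _).
case: (ex_maxnP exP ubP) => m /existsP [t /andP[pt ut]] mx.
exists t; split => // q pq uq.
rewrite size_tuple; apply: mx; apply/existsP; exists (in_tuple q).
by rewrite /= pq.
Qed.

Lemma card3 (V : finType) (A : {set V}) a b c :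
  a \in A -> b \in A -> c \in A -> a != b -> a != c -> b != c -> 3 <= #|A|.
Proof.
move=> aA bA cA ab ac bc.
rewrite (cardsD1 a) aA (cardsD1 b) !inE eq_sym ab bA /= !add1n !ltnS.
by apply/card_gt0P; exists c; rewrite !inE eq_sym bc eq_sym ac.
Qed.

Section Cyc.
Variable V : finType.
Variable r : rel V.
Hypothesis rsym : symmetric r.
Hypothesis rirr : irreflexive r.
Variable v : V.
Hypothesis deg2 : forall x, connect r v x -> #|[set y | r x y]| = 2.

Lemma two_reg_cycle : exists s : seq V, [/\ uniq s, 3 <= size s,
   component r v = [set x in s] &
   {in s &, forall x y, r x y = (y == next s x) || (x == next s y)}].
Proof.
have [p [pp up pmax]] := max_path r v.
have inc : forall x, x \in v :: p -> connect r v x := path_connect pp.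
case/lastP: p pp up pmax inc => [|p' w] pp up pmax inc.
  have : 0 < #|[set y | r v y]| by rewrite deg2 ?connect0.
  case/card_gt0P => y; rewrite inE => rvy.
  have vy : v != y by apply: contraTneq rvy => ->; rewrite rirr.
  by have := pmax [:: y]; rewrite /= rvy !inE vy => /(_ isT isT).
set u := last v p'.
have [pp' rwu] : path r v p' /\ r u w by move: pp; rewrite rcons_path => /andP[].
have Nw : forall y, r w y -> y \in v :: rcons p' w.
  move=> y rwy; apply/negPn/negP => yn.
  have := pmax (rcons (rcons p' w) y).
  rewrite rcons_path pp last_rcons rwy -rcons_cons rcons_uniq yn up size_rcons.
  by rewrite ltnn => /(_ isT isT).
have wc : connect r v w by apply: inc; rewrite inE mem_rcons inE eqxx orbT.
have : 0 < #|[set y | r w y] :\ u|.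
  by move: (deg2 wc); rewrite (cardsD1 u) !inE rsym rwu add1n => [[->]].
case/card_gt0P => z; rewrite !inE => /andP[zu rwz].
have zw : z != w by apply: contraTneq rwz => ->; rewrite rirr.
have zin : z \in v :: p' by move: (Nw _ rwz); rewrite !inE mem_rcons inE (negbTE zw).
have zv : z = v.
  apply/eqP; apply/negPn/negP => zv.
  move: zin; rewrite inE (negbTE zv) /= => zin.
  have zc : connect r v z by apply: inc; rewrite inE mem_rcons inE zin !orbT.
  move: (deg2 zc) => dz.
  move: zu; rewrite /u => zu; clear Nw inc pmax pp' rwu u.
  case/splitPr: zin pp up zu => p1 p2 pp up zu.
  case: p2 pp up zu => [|b p2] pp up zu.
    by move: zu; rewrite last_cat /= eqxx.
  move: pp; rewrite rcons_cat rcons_cons cat_path /= => /and4P[_ raz rzb _].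
  move: up; rewrite rcons_cat rcons_cons -cat_cons cat_uniq => /and3P[_ hn /= /andP[_ /andP[]]].
  rewrite mem_rcons inE negb_or => /andP[bw _] _.
  set a := last v p1 in raz.
  have ain : a \in v :: p1 by apply: mem_last.
  have aZ : a \notin z :: b :: rcons p2 w.
    by apply: contra hn => ha; apply/hasP; exists a.
  move: aZ; rewrite !inE mem_rcons inE !negb_or => /and4P[_ ab aw _].
  have := card3 (A := [set y | r z y]) (a := a) (b := b) (c := w).
  by rewrite !inE rsym raz rzb rsym rwz dz ab aw bw => /(_ isT isT isT isT isT isT).
have rwv : r w v by rewrite -zv.
have szp : 0 < size p' by move: zu; rewrite /u zv; case: (p') => //=; rewrite eqxx.
set s := v :: rcons p' w.
have cs : cycle r s by rewrite /s /= rcons_path pp last_rcons rwv.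
have ss : 2 < size s by rewrite /s /= size_rcons !ltnS.
have incs : forall x, x \in s -> connect r v x := inc.
have Nx : forall x, x \in s -> [set y | r x y] = [set next s x; prev s x].
  move=> x xs; apply/esym/eqP; rewrite eqEcard cards2 next_neq_prev // deg2 ?incs // leqnn andbT.
  apply/subsetP => y; rewrite !inE => /orP[] /eqP ->; first exact: next_cycle.
  by rewrite rsym; exact: prev_cycle.
exists s; split => //.
- apply/setP => y; rewrite !inE; apply/idP/idP => [|/incs //].
  apply: (conn_sub (T := fun x => x \in s)) => [a b ai rab|]; last by rewrite /s inE eqxx.
  have : b \in [set y | r a y] by rewrite inE.
  by rewrite Nx // in_set2 => /orP[] /eqP ->; rewrite ?mem_next ?mem_prev.
- move=> x y xs ys.
  have -> : r x y = (y \in [set y | r x y]) by rewrite inE.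
  rewrite Nx // !inE; congr orb; apply/eqP/eqP => ->; by [rewrite next_prev | rewrite prev_next].
Qed.
End Cyc.

Lemma notS_conn (V : finType) (e : rel V) (S : {set V}) x y :
  x \notin S -> connect (del_rel e S) x y -> y \notin S.
Proof.
move=> xS; apply: (conn_sub (T := fun x => x \notin S)) => // a b _.
by rewrite /del_rel /= => /andP[_ ->].
Qed.

Lemma del_cycles (V : finType) (e : rel V) (S : {set V}) :
  symmetric e -> irreflexive e ->
  (forall x, x \notin S -> #|[set y | e x y && (y \notin S)]| = 2) ->
  components_induced_cycles e S.
Proof.
move=> se ie deg v vS.
have rsym : symmetric (del_rel e S) by move=> x y; rewrite /del_rel /= se andbAC.
have rirr : irreflexive (del_rel e S) by move=> x; rewrite /del_rel /= ie.
have dg : forall x, connect (del_rel e S) v x -> #|[set y | del_rel e S x y]| = 2.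
  move=> x vx; have xS := notS_conn vS vx.
  rewrite -(deg _ xS); apply: eq_card => y; by rewrite !inE /del_rel /= xS andbT.
have [s [us ss cs ps]] := two_reg_cycle rsym rirr dg.
exists s; split => // x y xs ys.
have sS : forall z, z \in s -> z \notin S.
  by move=> z; move/setP: cs => /(_ z); rewrite !inE => <-; apply: notS_conn.
by rewrite -ps // /del_rel /= (sS _ xs) (sS _ ys) !andbT.
Qed.

Lemma inN (V : finType) (e : rel V) x y : (y \in neighbours e x) = e x y.
Proof. by rewrite /neighbours inE. Qed.

Section Fwd.
Variable V : finType.
Variables (e H : rel V).
Hypothesis se : symmetric e.
Hypothesis ie : irreflexive e.
Hypothesis cub : cubic e.
Hypothesis Hsub : subrel H e.
Hypothesis Hsym : symmetric H.
Hypothesis HK : forall v, is_K13_component H v.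

Lemma compH x y : connect H x y -> component H x = component H y.
Proof.
move=> cxy; apply/setP => z; rewrite !inE.
by rewrite (same_connect (sym_connect_sym Hsym) cxy).
Qed.

Lemma in_comp x : x \in component H x.
Proof. by rewrite inE connect0. Qed.

Definition Sc := [set x | [forall y, (y \in component H x) ==> (y == x) || H x y]].

Lemma inS_iff v c : c \in component H v ->
  {in component H v &, forall x y, H x y = ((x == c) != (y == c))} ->
  #|component H v| = 4 ->
  forall x, x \in component H v -> (x \in Sc) = (x == c).
Proof.
move=> cv Hc c4 x xv.
have ex : component H x = component H v by rewrite inE in xv; rewrite (compH xv).
rewrite inE; apply/forallP/eqP => [h|->{x xv ex} y].
  apply/eqP; apply/negPn/negP => xc.
  have : 0 < #|component H v :\ x :\ c|.
    move: c4; rewrite (cardsD1 x) xv (cardsD1 c) in_setD1 cv eq_sym xc /=.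
    by rewrite add1n add1n => -[->].
  case/card_gt0P => y; rewrite !in_setD1 => /and3P[yc yx yv].
  have := h y; rewrite ex yv (negbTE yx) /= Hc // (negbTE xc) (negbTE yc) //.
have ec : component H c = component H v by rewrite inE in cv; rewrite (compH cv).
apply/implyP; rewrite ec => yv; rewrite Hc //; first by rewrite eqxx; case: (y == c).
Qed.

Lemma eN_center x y : x \in Sc -> e x y -> H x y.
Proof.
move=> xS exy; have [c4 [c cx Hc]] := HK x.
have xc : x = c by apply/eqP; rewrite -(inS_iff cx Hc c4 (in_comp x)).
subst c.
have sub : component H x :\ x \subset neighbours e x.
  apply/subsetP => z; rewrite in_setD1 => /andP[zx zc]; rewrite /neighbours inE.
  by apply: Hsub; rewrite Hc ?in_comp // eqxx zx.
have c3 : #|component H x :\ x| = 3 by move: c4; rewrite (cardsD1 x) in_comp add1n => -[].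
have eqs : component H x :\ x = neighbours e x.
  by apply/eqP; rewrite eqEcard sub cub c3.
have : y \in component H x :\ x by rewrite eqs /neighbours inE.
by rewrite in_setD1 => /andP[yx yc]; rewrite Hc ?in_comp // eqxx yx.
Qed.

Lemma Sc_indep : independent e Sc.
Proof.
move=> x y xS yS; apply/negP => exy.
have hxy := eN_center xS exy; have [c4 [c cx Hc]] := HK x.
have ycx : y \in component H x by rewrite inE connect1.
move: (inS_iff cx Hc c4 (in_comp x)) (inS_iff cx Hc c4 ycx).
rewrite xS yS => /esym/eqP xc /esym/eqP yc.
by move: exy; rewrite xc yc ie.
Qed.

Lemma Sc_deg x : x \notin Sc -> #|[set y | e x y && (y \notin Sc)]| = 2.
Proof.
move=> xS; have [c4 [c cx Hc]] := HK x.
have xc : x != c by rewrite -(inS_iff cx Hc c4 (in_comp x)).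
have cS : c \in Sc by rewrite (inS_iff cx Hc c4 cx).
have exc : e x c by apply: Hsub; rewrite Hc ?in_comp // eqxx (negbTE xc).
have I : neighbours e x :&: Sc = [set c].
  apply/setP => y; rewrite in_setI in_set1 inN; apply/andP/eqP => [[exy yS]|->]; last exact: conj exc cS.
  have hyx := eN_center yS (etrans (se y x) exy).
  have ycx : y \in component H x by rewrite inE connect1 // Hsym.
  by apply/eqP; rewrite -(inS_iff cx Hc c4 ycx).
have := cardsID Sc (neighbours e x); rewrite I cards1 cub add1n => -[] <-.
by apply: eq_card => y; rewrite in_setD inN in_set andbC.
Qed.
End Fwd.

Lemma inC (V : finType) (r : rel V) x y : (y \in component r x) = connect r x y.
Proof. by rewrite /component inE. Qed.

Lemma compEq (V : finType) (r : rel V) x y : symmetric r ->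
  connect r x y -> component r x = component r y.
Proof.
move=> rs cxy; apply/setP => z; rewrite !inC.
by rewrite (same_connect (sym_connect_sym rs) cxy).
Qed.

Section Bwd.
Variable V : finType.
Variables (e : rel V) (S : {set V}).
Hypothesis se : symmetric e.
Hypothesis ie : irreflexive e.
Hypothesis cub : cubic e.
Hypothesis Sind : independent e S.
Hypothesis CIC : components_induced_cycles e S.

Lemma degS x : x \notin S -> #|[set y | e x y && (y \notin S)]| = 2.
Proof.
move=> xS; have [s [us ss cs ps]] := CIC xS.
have sC : forall z, (z \in s) = connect (del_rel e S) x z.
  by move=> z; move/setP: cs => /(_ z); rewrite inC inE.
have sS : forall z, z \in s -> z \notin S.
  by move=> z; rewrite sC; apply: notS_conn.
have xs : x \in s by rewrite sC connect0.
have E : [set y | e x y && (y \notin S)] = [set next s x; prev s x].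
  apply/setP => y; rewrite in_set in_set2; apply/idP/idP.
    move=> /andP[exy yS].
    have ys : y \in s by rewrite sC connect1 // /del_rel /= exy xS yS.
    move: exy; rewrite ps // => /orP[->//|/eqP xn].
    by rewrite xn prev_next // eqxx orbT.
  case/orP => /eqP ->.
    by rewrite ps ?mem_next // eqxx sS ?mem_next.
  by rewrite ps ?mem_prev // next_prev // eqxx orbT sS ?mem_prev.
by rewrite E cards2 next_neq_prev.
Qed.

Lemma oneS x : x \notin S -> #|neighbours e x :&: S| = 1.
Proof.
move=> xS; have := cardsID S (neighbours e x); rewrite cub.
have -> : #|neighbours e x :\: S| = 2.
  rewrite -(degS xS); apply: eq_card => y; by rewrite in_setD inN in_set andbC.
by move=> h; apply/eqP; rewrite -(eqn_add2r 2) h.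
Qed.

Lemma uniqS x y z : x \notin S -> y \in S -> z \in S -> e x y -> e x z -> y = z.
Proof.
move=> xS yS zS exy exz.
have /cards1P [c hc] : #|neighbours e x :&: S| == 1 by rewrite oneS.
have : y \in neighbours e x :&: S by rewrite in_setI inN exy yS.
have : z \in neighbours e x :&: S by rewrite in_setI inN exz zS.
by rewrite hc !in_set1 => /eqP -> /eqP ->.
Qed.

Definition Hr := [rel x y | e x y && ((x \in S) != (y \in S))].

Lemma nbS c y : c \in S -> e c y -> (y \notin S) /\ (y != c).
Proof.
move=> cS ecy; split; first by apply/negP => yS; move: (Sind cS yS); rewrite ecy.
by apply: contraTneq ecy => ->; rewrite ie.
Qed.

Lemma compS c : c \in S -> component Hr c = c |: neighbours e c.
Proof.
move=> cS; apply/setP => y; rewrite inC in_setU1 inN; apply/idP/idP.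
  apply: (conn_sub (T := fun y => (y == c) || e c y)) => [a b|]; last by rewrite /= eqxx.
  move=> /= Ta /andP[eab sab]; case/orP: Ta => [/eqP ac|eca].
    by subst a; rewrite eab orbT.
  have [aS _] := nbS cS eca.
  have bS : b \in S by move: sab; rewrite (negbTE aS); case: (b \in S).
  have eac : e a c by rewrite se.
  by rewrite (uniqS aS bS cS eab eac) eqxx.
case/orP => [/eqP ->|ecy]; first exact: connect0.
have [yS _] := nbS cS ecy.
by apply: connect1; rewrite /= ecy cS yS.
Qed.

Lemma K13S c : c \in S -> is_K13_component Hr c.
Proof.
move=> cS; rewrite /is_K13_component compS //; split.
  by rewrite cardsU1 inN ie cub.
exists c; first by rewrite in_setU1 eqxx.
move=> x y; rewrite !in_setU1 !inN => /orP[/eqP->|ecx] /orP[/eqP->|ecy] /=.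
- by rewrite ie !eqxx.
- by have [yS yc] := nbS cS ecy; rewrite ecy cS yS eqxx (negbTE yc).
- by have [xS xc] := nbS cS ecx; rewrite se ecx cS (negbTE xS) eqxx (negbTE xc).
- have [xS xc] := nbS cS ecx; have [yS yc] := nbS cS ecy.
  by rewrite (negbTE xS) (negbTE yS) (negbTE xc) (negbTE yc) andbF.
Qed.

Lemma K13all v : is_K13_component Hr v.
Proof.
case vS: (v \in S); first exact: K13S.
have /cards1P [c hc] : #|neighbours e v :&: S| == 1 by rewrite oneS ?vS.
have : c \in neighbours e v :&: S by rewrite hc in_set1.
rewrite in_setI inN => /andP[evc cS].
have Hs : symmetric Hr.
  by move=> x y; rewrite /= se; congr andb; case: (x \in S); case: (y \in S).
have cvc : connect Hr v c by apply: connect1; rewrite /= evc vS cS.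
by rewrite /is_K13_component (compEq Hs cvc); exact: K13S.
Qed.
End Bwd.

Theorem mainTheorem3 (V : finType) (e : rel V) :
  fullerene e ->
  (perfect_star_packing e <->
   exists S : {set V}, independent e S /\ components_induced_cycles e S).
Proof.
move=> [[se ie] _ cub _]; split.
  case=> H [Hsub Hsym HK]; exists (Sc H); split.
    exact: (Sc_indep ie cub Hsub Hsym HK).
  by apply: del_cycles => // x; apply: (Sc_deg se cub Hsub Hsym HK).
case=> S [Sind CIC]; exists (Hr e S); split.
- by move=> x y /andP[].
- by move=> x y; rewrite /= se; congr andb; case: (x \in S); case: (y \in S).
- exact: K13all.
Qed.
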